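(* Let $G$ be a very well-covered graph with $V(G)=\{x_1,\ldots,x_h,y_1,\ldots,y_h\}$ such that $\{x_1,\ldots,x_h\}$ is a minimal vertex cover, $\{y_1,\ldots,y_h\}$ a maximal independent set and $\{x_i,y_i\}\in E(G)$ for all $i$. Let $s\ge1$, $e_1,\ldots,e_s\in E(G)$, and let $G'$ be the graph associated to $(I(G)^{s+1}:e_1\cdots e_s)$ as in the context. Let $u\in V(G)$ with $u^2\in(I(G)^{s+1}:e_1\cdots e_s)$. If $a\in N_{G'}([u]\setminus u)\cap V(G)$ and $b\in N_G[[u]]$, then $\{a,b\}\in E(G')$.
   Context: For $u\in\{x_i,y_i\}$, $[u]=\{x_i,y_i\}$, $[u]\setminus u$ denotes the other element of $[u]$, and $N_G[[u]]=N_G[x_i,y_i]$ is the closed neighbourhood $\{x_i,y_i\}\cup\{v\mid v$ adjacent in $G$ to $x_i$ or $y_i\}$; $N_{G'}(w)$ is the open neighbourhood of $w$ in $G'$. $I(G)$ is the edge ideal; edges are identified with the products of their endpoints. $G$ is very well-covered if it has no isolated vertices, all minimal vertex covers have the same size, and this size is $|V(G)|/2$. Even-connection: a sequence $p_0p_1\cdots p_{2k+1}$, $k\ge1$, with $\{p_r,p_{r+1}\}\in E(G)$ for all $r$, each $\{p_{2\ell+1},p_{2\ell+2}\}$ ($0\le\ell\le k-1$) equal to some $e_m$, each edge used among these at most as many times as it appears in $e_1,\dots,e_s$; then $p_0,p_{2k+1}$ (possibly equal) are even-connected. $(I(G)^{s+1}:e_1\cdots e_s)$ is minimally generated by $uv$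 with $\{u,v\}\in E(G)$ or $u,v$ even-connected; $G'$ is the graph whose edge ideal is the polarization of this ideal (each generator $u^2$ replaced by $uu^*$ with a new vertex $u^*$), so for $u\ne v\in V(G)$, $\{u,v\}\in E(G')$ iff $\{u,v\}\in E(G)$ or $u,v$ are even-connected. *)

(* Defs.v *)
From mathcomp Require Import all_boot.
Set Implicit Arguments. Unset Strict Implicit. Unset Printing Implicit Defensive.

Definition simple_graph (T : finType) (G : rel T) : Prop :=
  symmetric G /\ irreflexive G.

Definition vertex_cover (T : finType) (G : rel T) (C : {set T}) : Prop :=
  forall u v, G u v -> (u \in C) || (v \in C).

Definition minimal_vertex_cover (T : finType) (G : rel T) (C : {set T}) : Prop :=
  vertex_cover G C /\ forall D : {set T}, D \proper C -> ~ vertex_cover G D.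

Definition independent_set (T : finType) (G : rel T) (S : {set T}) : Prop :=
  forall u v, u \in S -> v \in S -> ~~ G u v.

Definition maximal_independent_set (T : finType) (G : rel T) (S : {set T}) : Prop :=
  independent_set G S /\ forall S' : {set T}, S \proper S' -> ~ independent_set G S'.

Definition very_well_covered (T : finType) (G : rel T) : Prop :=
  (forall v, exists w, G v w) /\
  (forall C : {set T}, minimal_vertex_cover G C -> (#|C|).*2 = #|T|).

Definition uedge (T : finType) (e : T * T) : {set T} := [set e.1; e.2].

Definition even_connected (T : finType) (G : rel T) (es : seq (T * T)) (u v : T) : Prop :=
  exists (k : nat) (p : nat -> T),
    [/\ 1 <= k, p 0 = u /\ p (2 * k + 1) = v,
        (forall r, r < 2 * k + 1 -> G (p r) (p r.+1)),
        (forall l, l < k -> [set p (2 * l + 1); p (2 * l + 2)] \in map (@uedge T) es) &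
        (forall S : {set T},
           count (fun l => [set p (2 * l + 1); p (2 * l + 2)] == S) (iota 0 k)
           <= count_mem S (map (@uedge T) es))].

(* uv is one of the minimal generators of (I(G)^{s+1} : e_1 ... e_s):
   {u,v} is an edge of G, or u and v are even-connected. For u = v this says
   u^2 lies in the colon ideal (equivalently {u, u*} is an edge of G'). *)
Definition colon_gen (T : finType) (G : rel T) (es : seq (T * T)) (u v : T) : Prop :=
  G u v \/ even_connected G es u v.

(* Edges of G' between two (distinct) original vertices of G. *)
Definition Gp_edge (T : finType) (G : rel T) (es : seq (T * T)) (u v : T) : Prop :=
  u != v /\ colon_gen G es u v.

(* Main.v *)
Require Import Defs.
From mathcomp Require Import all_boot.

From mathcomp Require Import zify.
Set Implicit Arguments. Unset Strict Implicit. Unset Printing Implicit Defensive.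

Lemma set2_eq (T : finType) (a b c d : T) :
  [set a; b] = [set c; d] -> a != b -> (c = a /\ d = b) \/ (c = b /\ d = a).
Proof.
move=> E ab.
have ha : a \in [set c; d] by rewrite -E set21.
have hb : b \in [set c; d] by rewrite -E set22.
have hc : c \in [set a; b] by rewrite E set21.
have hd : d \in [set a; b] by rewrite E set22.
move: ha hb hc hd; rewrite !inE.
case/orP=> /eqP ea; case/orP=> /eqP eb; subst.
- by rewrite eqxx in ab.
- by left.
- by right.
- by rewrite eqxx in ab.
Qed.

Definition ue (T : finType) (f : T * T) : {set T} := [set f.1; f.2].
Definition rl (T : finType) (G : rel T) (f g : T * T) := G f.2 g.1.
Definition ge (T : finType) (G : rel T) (f : T * T) := G f.1 f.2.
Definition mult (T : finType) (S : {set T}) (L : seq (T * T)) :=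
  count (fun f => ue f == S) L.
Definition swp (T : finType) (f : T * T) := (f.2, f.1).

Lemma ue_swp (T : finType) (f : T * T) : ue (swp f) = ue f.
Proof. by rewrite /ue /= setUC. Qed.

Lemma mult_swp (T : finType) X (A : seq (T * T)) : mult X (map (@swp T) A) = mult X A.
Proof. by rewrite /mult count_map; apply: eq_count => f /=; rewrite ue_swp. Qed.

Lemma last_rev' (T : Type) (x : T) s : last x (rev s) = head x s.
Proof. by case: s => //= a s; rewrite rev_cons last_rcons. Qed.

Lemma splitE (T : eqType) (x : T) s : x \in s -> exists A B, s = A ++ x :: B.
Proof. by case/splitPr => A B; exists A, B. Qed.

Lemma ifbound a m n : a <= m -> a <= (if 0 < m then m else n).
Proof. by case: m => [|m]; rewrite ?leqn0 //= => /eqP ->. Qed.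

Lemma revpath (T : finType) (G : rel T) (Gs : symmetric G) (A : seq (T * T)) x g :
  path (rl G) x (A ++ [:: g]) -> path (rl G) (swp g) (rev (map (@swp T) A)).
Proof.
elim: A x => [|a A IH] x //= /andP[_ H].
rewrite rev_cons rcons_path (IH _ H) /= last_rev'.
case: A H {IH} => [|a' A] /= /andP[H _]; by rewrite /rl /= Gs.
Qed.

Lemma merge (T : finType) (G : rel T) (Gs : symmetric G) (Gi : irreflexive G)
  (S : seq (T * T)) (s0 r : T * T) (R : seq (T * T)) :
  path (rl G) s0 (S ++ r :: R) -> all (ge G) (S ++ r :: R) ->
  exists c C, [/\ path (rl G) s0 (c :: C), all (ge G) (c :: C),
     ((last c C).2 = r.1 \/ (last c C).2 = (last r R).2) &
     forall X, mult X (c :: C) <=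
       (if 0 < mult X (r :: R) then mult X (r :: R) else mult X S)].
Proof.
elim: S s0 => [|f S IH] s0.
  move=> /= P A; exists r, R; split => //; first by right.
  by move=> X; apply: ifbound.
rewrite cat_cons /= => /andP[Hs0 P] /andP[Gf A].
case: (boolP (has (fun g => ue g == ue f) (r :: R))) => Hh.
  case/hasP: Hh => g Hg /eqP Ege.
  have Gg : ge G g by move: A; rewrite all_cat => /andP[_ /allP]; apply.
  case: (splitE Hg) => A0 [B eAB].
  have Pr : path (rl G) (last f S) (r :: R) by move: P; rewrite cat_path => /andP[].
  have Ar : all (ge G) (r :: R) by move: A; rewrite all_cat => /andP[].
  have fne : f.1 != f.2 by apply/eqP => e; move: Gf; rewrite /ge e Gi.
  have Hm : forall X, mult X (g :: B) <= mult X (r :: R).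
    by move=> X; rewrite eAB /mult count_cat leq_addl.
  have [eg|eg] : g = f \/ g = swp f.
    case: (set2_eq (esym Ege) fne); case: g {Hg Ege Gg Hm eAB} => g1 g2 /= [-> ->].
    - by left; case: f {Hs0 P Gf fne Pr}.
    - by right.
  - subst g; exists f, B; split.
    - rewrite /= Hs0 /=; move: Pr; rewrite eAB cat_path => /andP[_] /=.
      by case/andP.
    - by move: Ar; rewrite eAB all_cat => /andP[].
    - right; have -> : last r R = last s0 (r :: R) by [].
      by rewrite eAB last_cat.
    - by move=> X; apply: ifbound; apply: Hm.
  - subst g; exists f, (rev (map (@swp T) A0)); split.
    - rewrite /= Hs0 /=.
      have -> : f = swp (swp f) by case: f {Hs0 P Gf fne Pr Hm Ege Hg Gg eAB}.
      apply: (revpath Gs (x := last f S)).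
      by move: Pr; rewrite eAB -cat1s catA [path _ _ (_ ++ B)]cat_path => /andP[].
    - rewrite /= Gf all_rev all_map; move: Ar; rewrite eAB all_cat => /andP[/allP HA _].
      by apply/allP => a Ha; rewrite /= /ge /= Gs; apply: HA.
    - left; rewrite last_rev'; case: A0 eAB => [|a A0] /= [-> _] //.
    - move=> X; apply: ifbound.
      have e1 : mult X (f :: rev (map (@swp T) A0)) = (ue f == X) + mult X A0.
        by rewrite {1}/mult /= count_rev; congr (_ + _); exact: mult_swp.
      have e2 : mult X (r :: R) = mult X A0 + ((ue (swp f) == X) + mult X B).
        by rewrite eAB /mult count_cat.
      suff : mult X (f :: rev (map (@swp T) A0)) <= mult X (r :: R) by []. by rewrite e1 e2 ue_swp addnCA leq_add2l leq_addr.
have [c [C [P1 A1 E1 B1]]] := IH f P A.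
exists f, (c :: C); split => //.
- by rewrite /= Hs0.
- by rewrite /= Gf.
- move=> X; case: ifP => H0.
    have -> : (ue f == X) = false.
      apply/negbTE/eqP => e; have : has (fun g => ue g == X) (r :: R) by rewrite has_count; exact: H0.
      case/hasP => g Hg /eqP eg.
      by move/negP: Hh; apply; apply/hasP; exists g => //; rewrite eg e.
    by move: (B1 X); rewrite H0 /mult /=.
  by move: (B1 X); rewrite H0 /mult /= leq_add2l.
Qed.

Definition ecl (T : finType) (G : rel T) (es : seq (T * T)) (a b : T) :=
  exists f L, [/\ G a f.1, G (last f L).2 b, path (rl G) f L, all (ge G) (f :: L) &
    forall X, mult X (f :: L) <= count_mem X (map (@uedge T) es)].

Lemma last_iota1 k m : last m (iota m.+1 k) = m + k.
Proof. by elim: k m => [|k IH] m /=; [rewrite addn0 | rewrite IH addSnnS]. Qed.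

Lemma ec_ecl (T : finType) (G : rel T) es a b :
  even_connected G es a b -> ecl G es a b.
Proof.
case=> k [p [k1 [p0 pk] Hadj Hin Hcnt]].
pose F l := (p (2*l+1), p (2*l+2)).
case: k k1 pk Hadj Hin Hcnt => [//|k'] _ pk Hadj Hin Hcnt.
exists (F 0), (map F (iota 1 k')).
have eL : F 0 :: map F (iota 1 k') = map F (iota 0 k'.+1) by [].
split.
- by rewrite -p0; exact: (Hadj 0 _).
- rewrite last_map last_iota1 add0n /F /= -pk.
  have := Hadj (2*k'+2) _; rewrite (_ : (2*k'+2).+1 = 2*k'.+1+1); last by lia.
  by apply; lia.
- apply/(pathP (F 0)) => i; rewrite size_map size_iota => Hi.
  rewrite eL (nth_map 0) ?size_iota; last by lia.
  rewrite (nth_map 0) ?size_iota // !nth_iota //; last by lia.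
  rewrite /rl /F /=.
  have := Hadj (2*i+2) _; rewrite (_ : (2*i+2).+1 = 2*(1+i)+1); last by lia.
  by apply; lia.
- rewrite eL; apply/allP => g /mapP [l Hl ->]; rewrite mem_iota in Hl.
  rewrite /ge /F /=.
  have := Hadj (2*l+1) _; rewrite (_ : (2*l+1).+1 = 2*l+2); last by lia.
  by apply; lia.
- by move=> X; rewrite eL /mult count_map; exact: Hcnt.
Qed.

Lemma ecl_ec (T : finType) (G : rel T) es a b :
  ecl G es a b -> even_connected G es a b.
Proof.
case=> f [L [Ga Gb P A C]].
set s := f :: L; set k := size s.
have k1 : 1 <= k by rewrite /k /s.
pose p r := if r == 0 then a else if r == 2*k+1 then b
  else if r %% 2 == 1 then (nth f s (r %/ 2)).1 else (nth f s (r %/ 2 - 1)).2.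
have pl : forall l, l < k -> p (2*l+1) = (nth f s l).1 /\ p (2*l+2) = (nth f s l).2.
  move=> l lk; rewrite /p.
  have -> : (2*l+1 == 0) = false by apply/eqP; lia.
  have -> : (2*l+1 == 2*k+1) = false by apply/eqP; lia.
  have -> : ((2*l+1) %% 2 == 1) = true by apply/eqP; lia.
  have -> : (2*l+2 == 0) = false by apply/eqP; lia.
  have -> : (2*l+2 == 2*k+1) = false by apply/eqP; lia.
  have -> : ((2*l+2) %% 2 == 1) = false by apply/eqP; lia.
  have -> : (2*l+1) %/ 2 = l by lia.
  have -> : (2*l+2) %/ 2 - 1 = l by lia.
  by [].
have Gs : forall l, l < k -> G (nth f s l).1 (nth f s l).2.
  by move=> l lk; move/allP: A; apply; apply: mem_nth.
exists k, p; split => //.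
- split; first by rewrite /p.
  rewrite /p; have -> : (2*k+1 == 0) = false by apply/eqP; lia.
  by rewrite eqxx.
- move=> r Hr.
  have [->|[[l [lk ->]]|[l [lk ->]]]] : r = 0 \/ (exists l, l < k /\ r = 2*l+1) \/ (exists l, l < k /\ r = 2*l+2).
  + case: (r =P 0) => [|r0]; first by left.
    case: (boolP (r %% 2 == 1)) => /eqP h; right; [left|right].
    * by exists (r %/ 2); split; lia.
    * by exists (r %/ 2 - 1); split; lia.
  + have [h1 _] := pl 0 k1; rewrite muln0 add0n in h1.
    by rewrite h1 /p /=.
  + rewrite (_ : (2*l+1).+1 = 2*l+2); last by lia.
    by have [-> ->] := pl l lk; apply: Gs.
  + have [_ ->] := pl l lk.
    case: (ltnP l.+1 k) => hl.
      rewrite (_ : (2*l+2).+1 = 2*l.+1+1); last by lia.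
      have [-> _] := pl _ hl.
      by move/(pathP f): P; apply; rewrite /k /s /= in hl; lia.
    have -> : (2*l+2).+1 = 2*k+1 by lia.
    have -> : p (2*k+1) = b.
      rewrite /p; have -> : (2*k+1 == 0) = false by apply/eqP; lia.
      by rewrite eqxx.
    have -> : l = (size s).-1 by rewrite /k in lk hl; lia.
    by rewrite nth_last.
- move=> l lk; have [-> ->] := pl l lk.
  have : 0 < count_mem (ue (nth f s l)) (map (@uedge T) es).
    apply: leq_trans (C _); rewrite /mult -has_count; apply/hasP.
    by exists (nth f s l); [apply: mem_nth | ].
  by rewrite -has_count has_pred1.
- move=> X.
  have eq : map (fun l => (p (2*l+1), p (2*l+2))) (iota 0 k) = s.
    rewrite -[RHS](mkseq_nth f s) /mkseq -/k; apply/eq_in_map => l; rewrite mem_iota => /andP[_ lk].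
    by have [-> ->] := pl l lk; case: (nth f s l).
  have CX : count (fun g => ue g == X) s <= count_mem X (map (@uedge T) es) := C X.
  by rewrite -eq count_map in CX.
Qed.

Lemma ar1 (a c t h : nat) : a + c = t -> c.*2 = t -> h.*2 = t -> a = h.
Proof. rewrite -!mul2n; lia. Qed.

Lemma ar2 (i h : nat) : i < h -> h <= h.-1 -> False.
Proof. lia. Qed.

Lemma keyF (T : finType) (G : rel T) (h : nat) (x y : 'I_h -> T) (i : 'I_h) (v z : T) :
  simple_graph G -> very_well_covered G -> injective x ->
  (forall v : T, exists j, v = x j \/ v = y j) ->
  minimal_vertex_cover G [set x j | j in 'I_h] ->
  independent_set G [set y j | j in 'I_h] ->
  (forall j, G (x j) (y j)) ->
  G (y i) v -> G (x i) z -> G v z.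
Proof.
move=> [Gs Gi] [_ Hvwc] xinj cover mvcX indY Gxy Gyv Gxz.
have [m [evm|evm]] := cover v; subst v; last first.
  have yin : forall j, y j \in [set y j | j in 'I_h] by move=> j; apply/imsetP; exists j.
  by move: (indY (y i) (y m) (yin i) (yin m)); rewrite Gyv.
apply/negPn/negP => Hn.
pose indb (I : {set T}) := [forall u in I, forall w in I, ~~ G u w].
pose I0 := [set z; x m].
pose P := fun I => indb I && (I0 \subset I).
have PI0 : P I0.
  rewrite /P subxx andbT; apply/forallP => u; apply/implyP => Hu.
  apply/forallP => w; apply/implyP => Hw.
  move: Hu Hw; rewrite !inE => /orP[]/eqP-> /orP[]/eqP->; rewrite ?Gi //.
  - by rewrite Gs.
have [I maxI subI] := maxset_exists PI0.
have [PI maxP] := maxsetP maxI.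
have indI : forall u w, u \in I -> w \in I -> ~~ G u w.
  move=> u w uI wI; case/andP: PI => /forallP/(_ u) /implyP/(_ uI) /forallP/(_ w)/implyP/(_ wI) //.
have zI : z \in I by apply: (subsetP subI); rewrite !inE eqxx.
have xmI : x m \in I by apply: (subsetP subI); rewrite !inE eqxx orbT.
have xiI : x i \notin I by apply/negP => H; move: (indI _ _ H zI); rewrite Gxz.
have yiI : y i \notin I by apply/negP => H; move: (indI _ _ H xmI); rewrite Gyv.
have mvcC : minimal_vertex_cover G (~: I).
  split.
    move=> u w Guw; rewrite !inE -negb_and; apply/negP => /andP[uI wI].
    by move: (indI _ _ uI wI); rewrite Guw.
  move=> D /properP [DC [v vC vD]] vcD.
  have PI' : P (v |: I).
    apply/andP; split; last by apply: subset_trans subI (subsetUr _ _).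
    apply/forallP => u; apply/implyP => Hu; apply/forallP => w; apply/implyP => Hw.
    have aux : forall w, w \in I -> ~~ G v w.
      move=> w0 w0I; apply/negP => G0; case/orP: (vcD _ _ G0) => H; first by rewrite H in vD.
      by move: (subsetP DC _ H); rewrite inE w0I.
    move: Hu Hw; rewrite !inE => /orP[/eqP->|uI] /orP[/eqP->|wI].
    - by rewrite Gi.
    - exact: aux.
    - by rewrite Gs; apply: aux.
    - exact: indI.
  have := maxP _ PI' (subsetUr _ _) => /setP /(_ v); rewrite !inE eqxx /=.
  by move=> e; move: vC; rewrite inE -e.
have hC := Hvwc _ mvcC.
have hX := Hvwc _ mvcX.
rewrite card_imset // card_ord in hX.
have cI : #|I| = h.
  exact: (ar1 (cardsC I) hC hX).
pose pi (v : T) := odflt i [pick j | (v == x j) || (v == y j)].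
have pipr : forall v, v = x (pi v) \/ v = y (pi v).
  move=> v0; rewrite /pi; case: pickP => [j /orP[/eqP|/eqP] //= -> |none]; [by left|by right|].
  by have [j [e|e]] := cover v0; move: (none j); rewrite e eqxx ?orbT.
have injI : {in I &, injective pi}.
  move=> u w uI wI e.
  have [eu|eu] := pipr u; have [ew|ew] := pipr w; rewrite -e in ew.
  - by rewrite eu ew.
  - by move: (indI _ _ uI wI); rewrite eu ew Gxy.
  - by move: (indI _ _ wI uI); rewrite eu ew Gxy.
  - by rewrite eu ew.
have sub : pi @: I \subset [set~ i].
  apply/subsetP => j /imsetP [w wI ->]; rewrite !inE; apply/eqP => e.
  by have [ew|ew] := pipr w; rewrite e in ew; rewrite ew in wI; [rewrite wI in xiI|rewrite wI in yiI].
have := subset_leq_card sub; rewrite card_in_imset // cardsC1 card_ord cI.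
exact: ar2 (ltn_ord i).
Qed.

Lemma merge2 (T : finType) (G : rel T) (es : seq (T * T)) (Gs : symmetric G)
  (Gi : irreflexive G) (a : T) (rf : T * T) (RL : seq (T * T)) (Q : pred T) :
  path (rl G) rf RL -> all (ge G) (rf :: RL) ->
  (forall X, mult X (rf :: RL) <= count_mem X (map (@uedge T) es)) ->
  Q rf.1 -> Q (last rf RL).2 ->
  (exists f L, [/\ G a f.1, path (rl G) f L, all (ge G) (f :: L),
     (forall X, mult X (f :: L) <= count_mem X (map (@uedge T) es)) &
     G (last f L).2 rf.1]) ->
  exists f L, [/\ G a f.1, Q (last f L).2, path (rl G) f L, all (ge G) (f :: L) &
     (forall X, mult X (f :: L) <= count_mem X (map (@uedge T) es))].
Proof.
move=> PR AR CR Q1 Q2 [f [L [Ga PS AS CS Gl]]].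
have P : path (rl G) (a, a) ((f :: L) ++ rf :: RL).
  by rewrite /= cat_path /= PS PR /rl /= Ga Gl.
have A : all (ge G) ((f :: L) ++ rf :: RL) by rewrite all_cat AS AR.
have [c [C [P1 A1 E1 B1]]] := merge Gs Gi P A.
exists c, C; split => //.
- by case/andP: P1.
- by case: E1 => ->.
- by case/andP: P1.
- move=> X; apply: leq_trans (B1 X) _; case: ifP => _; [exact: CR | exact: CS].
Qed.

Unset Implicit Arguments.

Theorem lemma4p4 (T : finType) (G : rel T) (h : nat) (x y : 'I_h -> T)
  (es : seq (T * T)) (u w a b : T) (i : 'I_h) :
  simple_graph G ->
  very_well_covered G ->
  injective x -> injective y -> (forall j l, x j != y l) ->
  (forall v : T, exists j, v = x j \/ v = y j) ->
  minimal_vertex_cover G [set x j | j in 'I_h] ->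
  maximal_independent_set G [set y j | j in 'I_h] ->
  (forall j, G (x j) (y j)) ->
  (* e_1, ..., e_s with s >= 1, all edges of G *)
  0 < size es -> (forall e, e \in es -> G e.1 e.2) ->
  (* u is a vertex of [u] = {x_i, y_i} and w = [u] \ u *)
  ((u = x i /\ w = y i) \/ (u = y i /\ w = x i)) ->
  (* u^2 lies in (I(G)^{s+1} : e_1 ... e_s) *)
  colon_gen G es u u ->
  (* a in N_{G'}([u] \ u) \cap V(G) *)
  Gp_edge G es a w ->
  (* b in N_G[[u]] = N_G[x_i, y_i] *)
  (b = x i \/ b = y i \/ G (x i) b \/ G (y i) b) ->
  (* {a,b} in E(G'), i.e. ab is a generator of the colon ideal *)
  colon_gen G es a b.
Proof.
move=> Gsim vwc xinj yinj xy cover mvcX [indY _] Gxy s1 esG Hu Huu [aw Haw] Hb.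
have [Gs Gi] := Gsim.
have F : forall v z, G (y i) v -> G (x i) z -> G v z.
  by move=> v z; apply: (keyF Gsim vwc xinj cover mvcX indY Gxy).
case: Huu => [Guu|ecuu]; first by rewrite Gi in Guu.
have [rf [RL [R1 R2 R3 R4 R5]]] := ec_ecl ecuu.
have viaR : G a rf.1 -> G (last rf RL).2 b -> colon_gen G es a b.
  by move=> h1 h2; right; apply: ecl_ec; exists rf, RL; split.
have viaM : forall f L, G a f.1 -> path (rl G) f L -> all (ge G) (f :: L) ->
    (forall X, mult X (f :: L) <= count_mem X (map (@uedge T) es)) ->
    G (last f L).2 rf.1 -> G rf.1 b -> G (last rf RL).2 b -> colon_gen G es a b.
  move=> f L h1 h2 h3 h4 h5 q1 q2; right; apply: ecl_ec.
  have [c [C [c1 c2 c3 c4 c5]]] := merge2 (Q := fun t => G t b) Gs Gi R3 R4 R5 q1 q2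
     (ex_intro _ f (ex_intro _ L (And5 h1 h2 h3 h4 h5))).
  by exists c, C; split.
case: Hu => [[eu ew]|[eu ew]]; subst u w.
- case: Haw => [Gay|/ec_ecl [sf [SL [S1 S2 S3 S4 S5]]]].
  + have Fa : forall z, G (x i) z -> G a z by move=> z; apply: F; rewrite Gs.
    case: Hb => [eb|[eb|[Gb|Gb]]]; try subst b.
    * by apply: viaR => //; apply: Fa.
    * by left.
    * by left; apply: Fa.
    * apply: viaR; first by apply: Fa.
      by rewrite Gs; apply: F => //; rewrite Gs.
  + have Fd : forall z, G (x i) z -> G (last sf SL).2 z by move=> z; apply: F; rewrite Gs.
    case: Hb => [eb|[eb|[Gb|Gb]]]; try subst b.
    * apply: (viaM sf SL) => //; first by apply: Fd.
      by rewrite Gs.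
    * by right; apply: ecl_ec; exists sf, SL; split.
    * by right; apply: ecl_ec; exists sf, SL; split => //; apply: Fd.
    * apply: (viaM sf SL) => //; first by apply: Fd.
        by rewrite Gs; apply: F.
      by rewrite Gs; apply: F => //; rewrite Gs.
- have Fc : forall z, G (x i) z -> G rf.1 z by move=> z; apply: F.
  have Fl : forall z, G (x i) z -> G (last rf RL).2 z by move=> z; apply: F; rewrite Gs.
  case: Haw => [Gax|/ec_ecl [sf [SL [S1 S2 S3 S4 S5]]]].
  + case: Hb => [eb|[eb|[Gb|Gb]]]; try subst b.
    * by left.
    * by apply: viaR => //; rewrite Gs; apply: Fc; rewrite Gs.
    * by apply: viaR; [rewrite Gs; apply: Fc; rewrite Gs | apply: Fl].
    * by left; rewrite Gs; apply: F => //; rewrite Gs.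
  + case: Hb => [eb|[eb|[Gb|Gb]]]; try subst b.
    * by right; apply: ecl_ec; exists sf, SL; split.
    * apply: (viaM sf SL) => //.
      - by rewrite Gs; apply: Fc; rewrite Gs.
      - by rewrite Gs.
    * apply: (viaM sf SL) => //; first by rewrite Gs; apply: Fc; rewrite Gs.
      - by apply: Fc.
      - by apply: Fl.
    * by right; apply: ecl_ec; exists sf, SL; split => //; rewrite Gs; apply: F => //; rewrite Gs.
Qed.
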